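(* Let $Q_k$ be a $K$-subset system. For every non-limit ordinal $\alpha$, every $\alpha^k$-special $T_0$ space is irreducible.
   Context: For a $K$-subset system $Q_k$ (an assignment $X\mapsto Q_k(X)$ with $\{\uparrow x\}\subseteq Q_k(X)\subseteq Q(X)$, the nonempty compact saturated sets, such that continuous images of $k$-Rudin sets are $k$-Rudin), a nonempty $A\subseteq X$ is $k$-Rudin if for some filtered $\mathcal K\subseteq Q_k(X)$, $\overline A$ is a minimal closed set meeting every member of $\mathcal K$. $K(X)$ is the set of classes of $k$-Rudin sets under $A\sim B\iff\overline A=\overline B$, with open sets $U^*=\{[A]\mid A\cap U\ne\emptyset\}$; $X$ embeds via $x\mapsto[\{x\}]$. $K_0(X)=X$, $K_{\beta+1}(X)=K(K_\beta(X))$, $K_\beta(X)=\bigcup_{\gamma<\beta}K_\gamma(X)$ for limit $\beta$. $\mathrm{rank}_k(X)$ is the least $\alpha$ with $K_\alpha(X)\cong K_{\alpha+1}(X)$. $X$ is $\alpha^k$-special if $\mathrm{rank}_k(X)=\alpha$ and $\alpha$ is the least ordinal for which $K_\alpha(X)$ has a greatest element in its specialization order. A space is irreducible if it is nonempty and not the union of two proper closed subsets. *)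

(* Defs.v *)
(* point-set topology written from scratch (spaces are built
   on the fly by the K-construction, so a light-weight record is used). *)
From Stdlib Require Import List.

Set Implicit Arguments.

Record Space := mkSpace { pt :> Type; isOpen : (pt -> Prop) -> Prop }.

Section Topology.
Context {X : Space}.

Definition is_topology : Prop :=
  isOpen X (fun _ => True) /\
  (forall U V, isOpen X U -> isOpen X V -> isOpen X (fun x => U x /\ V x)) /\
  (forall F : (X -> Prop) -> Prop, (forall U, F U -> isOpen X U) ->
     isOpen X (fun x => exists U, F U /\ U x)).

Definition subset (A B : X -> Prop) : Prop := forall x, A x -> B x.
Definition meets (A B : X -> Prop) : Prop := exists x, A x /\ B x.

Definition closed (C : X -> Prop) : Prop := isOpen X (fun x => ~ C x).

Definition closure (A : X -> Prop) : X -> Prop :=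
  fun x => forall C, closed C -> subset A C -> C x.

Definition spec_le (x y : X) : Prop := closure (fun z => z = y) x.

Definition up (x : X) : X -> Prop := fun y => spec_le x y.

Definition saturated (A : X -> Prop) : Prop :=
  forall x, (forall U, isOpen X U -> subset A U -> U x) -> A x.

Definition compact (A : X -> Prop) : Prop :=
  forall F : (X -> Prop) -> Prop, (forall U, F U -> isOpen X U) ->
    subset A (fun x => exists U, F U /\ U x) ->
    exists l : list (X -> Prop), (forall U, In U l -> F U) /\
      subset A (fun x => exists U, In U l /\ U x).

Definition in_Q (A : X -> Prop) : Prop :=
  (exists x, A x) /\ compact A /\ saturated A.

Definition filtered (KK : (X -> Prop) -> Prop) : Prop :=
  (exists K, KK K) /\
  forall K1 K2, KK K1 -> KK K2 -> exists K3, KK K3 /\ subset K3 K1 /\ subset K3 K2.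

Definition min_closed_meeting (KK : (X -> Prop) -> Prop) (C : X -> Prop) : Prop :=
  closed C /\ (forall K, KK K -> meets C K) /\
  forall B, closed B -> subset B C -> (forall K, KK K -> meets B K) -> subset C B.

Definition has_greatest : Prop := exists t : X, forall x, spec_le x t.

Definition T0 : Prop :=
  forall x y : X, (forall U, isOpen X U -> (U x <-> U y)) -> x = y.

Definition irreducible : Prop :=
  (exists x : X, True) /\
  forall C1 C2, closed C1 -> closed C2 -> (forall x, C1 x \/ C2 x) ->
    (forall x, C1 x) \/ (forall x, C2 x).

End Topology.
Arguments is_topology X : clear implicits.
Arguments has_greatest X : clear implicits.
Arguments T0 X : clear implicits.
Arguments irreducible X : clear implicits.

Definition continuous {X Y : Space} (f : X -> Y) : Prop :=
  forall V, isOpen Y V -> isOpen X (fun x => V (f x)).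

Definition image {X Y : Space} (f : X -> Y) (A : X -> Prop) : Y -> Prop :=
  fun y => exists x, A x /\ f x = y.

Definition homeo {X Y : Space} (f : X -> Y) : Prop :=
  exists g : Y -> X, (forall x, g (f x) = x) /\ (forall y, f (g y) = y) /\
    continuous f /\ continuous g.

Definition homeomorphic (X Y : Space) : Prop := exists f : X -> Y, homeo f.

Definition subset_assignment := forall X : Space, (X -> Prop) -> Prop.

Definition k_rudin (Qk : subset_assignment) (X : Space) (A : X -> Prop) : Prop :=
  (exists x, A x) /\
  exists KK : (X -> Prop) -> Prop,
    (forall K, KK K -> Qk X K) /\ filtered KK /\
    min_closed_meeting KK (closure A).

Record KSubsetSystem := {
  Qk : subset_assignment;
  Qk_up : forall X : Space, is_topology X -> forall x : X, Qk X (up x);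
  Qk_in_Q : forall X : Space, is_topology X -> forall A, Qk X A -> in_Q A;
  Qk_image : forall (X Y : Space) (f : X -> Y), is_topology X -> is_topology Y ->
    continuous f -> forall A, k_rudin Qk X A -> k_rudin Qk Y (image f A)
}.

(** K(X): a class [A] of k-Rudin sets is represented by the common closure
    cl(A); the open sets are the U^* = {[A] | A meets U} = {[A] | cl A meets U}. *)
Definition Kcarrier (Q : KSubsetSystem) (X : Space) : Type :=
  { C : X -> Prop | exists A, k_rudin (Qk Q) X A /\ forall x, C x <-> closure A x }.

Definition KSpace (Q : KSubsetSystem) (X : Space) : Space :=
  @mkSpace (Kcarrier Q X)
    (fun V => exists U, isOpen X U /\
       forall c : Kcarrier Q X, V c <-> meets (proj1_sig c) U).

(** Ordinals: an ordinal is an element of a well-ordered type. *)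
Definition well_order (W : Type) (lt : W -> W -> Prop) : Prop :=
  well_founded lt /\ (forall a b c, lt a b -> lt b c -> lt a c) /\
  (forall a b, lt a b \/ a = b \/ lt b a).

Definition le_of (W : Type) (lt : W -> W -> Prop) (a b : W) : Prop := lt a b \/ a = b.

Definition is_least (W : Type) (lt : W -> W -> Prop) (w : W) : Prop :=
  forall v, ~ lt v w.

Definition is_succ_of (W : Type) (lt : W -> W -> Prop) (p w : W) : Prop :=
  lt p w /\ forall v, lt v w -> le_of lt v p.

Definition is_limit (W : Type) (lt : W -> W -> Prop) (w : W) : Prop :=
  ~ is_least lt w /\ ~ (exists p, is_succ_of lt p w).

Definition non_limit (W : Type) (lt : W -> W -> Prop) (w : W) : Prop :=
  is_least lt w \/ exists p, is_succ_of lt p w.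

(** The transfinite tower K_w(X) (w ranging over the well-order W), together
    with the canonical embeddings e v w : K_v(X) -> K_w(X) (v <= w), specified
    up to compatible homeomorphism:
    - K_0(X) = X,
    - K_{p+1}(X) = K(K_p(X)) with e p (p+1) the embedding x |-> [{x}],
    - at limits, K_w(X) is the union (direct limit) of the K_v(X), v < w,
      with the final (union) topology. *)
Definition is_K_tower (Q : KSubsetSystem) (W : Type) (lt : W -> W -> Prop)
    (X : Space) (S : W -> Space) (e : forall v w : W, S v -> S w) : Prop :=
  (forall w (x : S w), e w w x = x) /\
  (forall u v w (x : S u), le_of lt u v -> le_of lt v w ->
      e u w x = e v w (e u v x)) /\
  (forall w, is_least lt w -> homeomorphic X (S w)) /\
  (forall p w, is_succ_of lt p w ->
     exists psi : KSpace Q (S p) -> S w, homeo psi /\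
       forall (x : S p) (c : KSpace Q (S p)),
         (forall y, proj1_sig c y <-> closure (fun z => z = x) y) ->
         e p w x = psi c) /\
  (forall w, is_limit lt w ->
     (forall y : S w, exists v (x : S v), lt v w /\ e v w x = y) /\
     (forall v v' (x : S v) (y : S v'), lt v w -> lt v' w ->
        (e v w x = e v' w y <->
         exists u, lt u w /\ le_of lt v u /\ le_of lt v' u /\ e v u x = e v' u y)) /\
     (forall U : S w -> Prop,
        isOpen (S w) U <-> forall v, lt v w -> isOpen (S v) (fun x => U (e v w x)))).

(** X is alpha^k-special: rank_k(X) = alpha (alpha is least with
    K_alpha(X) homeomorphic to K_{alpha+1}(X) = K(K_alpha(X))), and alpha is
    least such that K_alpha(X) has a greatest element. *)
Definition is_special (Q : KSubsetSystem) (W : Type) (lt : W -> W -> Prop)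
    (S : W -> Space) (alpha : W) : Prop :=
  homeomorphic (S alpha) (KSpace Q (S alpha)) /\
  (forall g, lt g alpha -> ~ homeomorphic (S g) (KSpace Q (S g))) /\
  has_greatest (S alpha) /\
  (forall g, lt g alpha -> ~ has_greatest (S g)).

(* Main.v *)
Require Import Defs.
From Stdlib Require Import List Setoid Classical FunctionalExtensionality PropExtensionality.

Lemma pext {T : Type} (P Q : T -> Prop) : (forall x, P x <-> Q x) -> P = Q.
Proof. intro H; apply functional_extensionality; intro x; apply propositional_extensionality; auto. Qed.

Lemma open_ext (X : Space) (U V : X -> Prop) : (forall x, U x <-> V x) -> isOpen X U -> isOpen X V.
Proof. intros H; rewrite (pext U V H); auto. Qed.

Lemma top_union2 (X : Space) (U V : X -> Prop) : is_topology X -> isOpen X U -> isOpen X V ->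
  isOpen X (fun x => U x \/ V x).
Proof.
  intros [_ [_ Hu]] HU HV.
  apply open_ext with (fun x => exists W, (fun W => W = U \/ W = V) W /\ W x).
  - intro x; split.
    + intros [W [[-> | ->] Wx]]; auto.
    + intros [Ux|Vx]; [exists U | exists V]; auto.
  - apply Hu. intros W [-> | ->]; auto.
Qed.

Lemma top_empty (X : Space) : is_topology X -> isOpen X (fun _ => False).
Proof.
  intros [_ [_ Hu]].
  apply open_ext with (fun x => exists U, (fun _ : X -> Prop => False) U /\ U x).
  - intro x; split; [intros [U [[] _]] | intros []].
  - apply Hu; intros U [].
Qed.

Lemma cl_sub (X : Space) (A : X -> Prop) : subset A (closure A).
Proof. intros x Ax C _ HC; auto. Qed.

Lemma cl_min (X : Space) (A C : X -> Prop) : closed C -> subset A C -> subset (closure A) C.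
Proof. intros HC HAC x Hx; apply Hx; auto. Qed.

Lemma cl_closed (X : Space) (A : X -> Prop) : is_topology X -> closed (closure A).
Proof.
  intros [_ [_ Hu]]. unfold closed.
  apply open_ext with (fun x => exists U, (fun U => exists C, closed C /\ subset A C /\ U = (fun y => ~ C y)) U /\ U x).
  - intro x; split.
    + intros [U [[C [HC [HAC ->]]] HU]] Hx. apply HU, Hx; auto.
    + intro Hx. unfold closure in Hx. apply not_all_ex_not in Hx as [C HC].
      apply imply_to_and in HC as [HC1 HC2]. apply imply_to_and in HC2 as [HC2 HC3].
      exists (fun y => ~ C y). split; [exists C; auto | exact HC3].
  - apply Hu. intros U [C [HC [_ ->]]]. exact HC.
Qed.

Lemma cl1_open (X : Space) (x : X) (U : X -> Prop) : isOpen X U ->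
  (meets (closure (fun z => z = x)) U <-> U x).
Proof.
  intro HU; split.
  - intros [y [Hy HUy]]. apply NNPP; intro Hn.
    assert (Hc : closed (fun z => ~ U z)).
    { unfold closed. apply open_ext with U; auto. intro; split; [auto | apply NNPP]. }
    apply (Hy _ Hc); [intros z ->; exact Hn | exact HUy].
  - intro; exists x; split; [apply cl_sub; reflexivity | auto].
Qed.

Lemma up_refl (X : Space) (x : X) : up x x.
Proof. unfold up, spec_le. apply cl_sub; reflexivity. Qed.

Lemma single_rudin (Q : KSubsetSystem) (X : Space) (x : X) : is_topology X ->
  k_rudin (Qk Q) X (fun z => z = x).
Proof.
  intro HT. split; [exists x; reflexivity|].
  exists (fun K => K = up x). split; [intros K ->; apply Qk_up; auto|].
  split.
  - split; [exists (up x); reflexivity|]. intros K1 K2 -> ->.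
    exists (up x); repeat split; auto; intros y; auto.
  - split; [apply cl_closed; auto|]. split.
    + intros K ->. exists x; split; [apply cl_sub; reflexivity | apply up_refl].
    + intros B HB _ HK. destruct (HK (up x) eq_refl) as [y [By Hy]].
      assert (Bx : B x). { apply Hy; auto. intros z ->; auto. }
      apply cl_min; auto. intros z ->; auto.
Qed.

Lemma rudin_meet (Q : KSubsetSystem) (X : Space) (A U1 U2 : X -> Prop) :
  is_topology X -> k_rudin (Qk Q) X A -> isOpen X U1 -> isOpen X U2 ->
  meets (closure A) U1 -> meets (closure A) U2 -> meets (closure A) (fun x => U1 x /\ U2 x).
Proof.
  intros HT [_ [KK [_ [[_ Hfil] [Hcl [Hmeet Hmin]]]]]] HU1 HU2 M1 M2.
  apply NNPP; intro Hn.
  assert (HB : forall U, isOpen X U -> meets (closure A) U ->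
             exists K, KK K /\ ~ meets (fun x => closure A x /\ ~ U x) K).
  { intros U HU MU. apply NNPP; intro H.
    assert (Hall : forall K, KK K -> meets (fun x => closure A x /\ ~ U x) K).
    { intros K HK. apply NNPP; intro H'. apply H; eauto. }
    destruct MU as [y [Ay Uy]].
    assert (Hc : closed (fun x => closure A x /\ ~ U x)).
    { unfold closed. apply open_ext with (fun x => (~ closure A x) \/ U x).
      - intro z; split; [tauto|]. intro h. destruct (classic (U z)); [right|left]; tauto.
      - apply top_union2; auto. }
    destruct (Hmin _ Hc (fun x h => proj1 h) Hall y Ay); contradiction. }
  destruct (HB U1 HU1 M1) as [K1 [HK1 N1]]. destruct (HB U2 HU2 M2) as [K2 [HK2 N2]].
  destruct (Hfil K1 K2 HK1 HK2) as [K3 [HK3 [S1 S2]]].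
  destruct (Hmeet K3 HK3) as [z [Az Kz]].
  destruct (classic (U1 z)) as [u1|u1].
  - destruct (classic (U2 z)) as [u2|u2].
    + apply Hn; exists z; auto.
    + apply N2; exists z; auto.
  - apply N1; exists z; auto.
Qed.

Lemma K_top (Q : KSubsetSystem) (X : Space) : is_topology X -> is_topology (KSpace Q X).
Proof.
  intro HT. pose proof HT as [HTt [HTi HTu]]. split; [|split].
  - simpl. exists (fun _ => True). split; auto. intro c. destruct c as [C [A [HA HC]]]; simpl.
    split; auto. intros _. destruct HA as [[x Ax] _]. exists x. split; [apply HC, cl_sub; auto | auto].
  - simpl. intros V1 V2 [U1 [HU1 H1]] [U2 [HU2 H2]]. exists (fun x => U1 x /\ U2 x). split; auto.
    intros c. rewrite H1, H2. destruct c as [C [A [HA HC]]]; simpl. split.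
    + intros [M1 M2].
      assert (M1' : meets (closure A) U1) by (destruct M1 as [y [? ?]]; exists y; rewrite <- HC; auto).
      assert (M2' : meets (closure A) U2) by (destruct M2 as [y [? ?]]; exists y; rewrite <- HC; auto).
      destruct (rudin_meet Q _ A U1 U2 HT HA HU1 HU2 M1' M2') as [y [? ?]]. exists y; rewrite HC; auto.
    + intros [y [Cy [u1 u2]]]; split; exists y; auto.
  - simpl. intros F HF.
    exists (fun x => exists U, (fun U => isOpen X U /\ exists V, F V /\
              forall c : Kcarrier Q X, V c <-> meets (proj1_sig c) U) U /\ U x).
    split.
    + apply HTu. intros U [? _]; auto.
    + intro c. split.
      * intros [V [FV Vc]]. destruct (HF V FV) as [U [HU HV]]. destruct (proj1 (HV c) Vc) as [y [cy Uy]].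
        exists y; split; auto. exists U; split; eauto.
      * intros [y [cy [U [[HU [V [FV HV]]] Uy]]]]. exists V; split; auto. apply HV. exists y; auto.
Qed.

Lemma homeo_top (X Y : Space) (f : X -> Y) : homeo f -> is_topology X -> is_topology Y.
Proof.
  intros [g [gf [fg [cf cg]]]] [Ht [Hi Hu]]. split; [|split].
  - exact (cg _ Ht).
  - intros U V HU HV. pose proof (cg _ (Hi _ _ (cf _ HU) (cf _ HV))) as H.
    apply open_ext with (2 := H). intro y; simpl; rewrite fg; tauto.
  - intros F HF.
    set (G := fun U' : X -> Prop => exists U, F U /\ U' = (fun x => U (f x))).
    assert (HG : forall U', G U' -> isOpen X U') by (intros U' [U [FU ->]]; apply cf; auto).
    pose proof (cg _ (Hu G HG)) as H.
    apply open_ext with (2 := H). intro y; simpl; split.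
    + intros [U' [[U [FU ->]] HU]]. exists U; rewrite fg in HU; auto.
    + intros [U [FU HU]]. exists (fun x => U (f x)); split; [exists U; auto | rewrite fg; auto].
Qed.

Lemma greatest_irr (X : Space) : has_greatest X -> irreducible X.
Proof.
  intros [t Ht]. split; [exists t; auto|].
  intros C1 C2 H1 H2 Hc. destruct (Hc t) as [c|c]; [left|right]; intro x; apply (Ht x); auto; intros z ->; auto.
Qed.

Lemma homeo_irr (X Y : Space) (f : X -> Y) : homeo f -> irreducible Y -> irreducible X.
Proof.
  intros [g [gf [fg [cf cg]]]] [[y _] Hirr]. split; [exists (g y); auto|].
  intros C1 C2 H1 H2 Hc.
  destruct (Hirr (fun y => C1 (g y)) (fun y => C2 (g y))) as [H|H].
  - exact (cg _ H1).
  - exact (cg _ H2).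
  - intro; apply Hc.
  - left; intro x; rewrite <- (gf x); apply H.
  - right; intro x; rewrite <- (gf x); apply H.
Qed.

Lemma transfer_irr (Y Z : Space) (ee : Y -> Z) : is_topology Z ->
  (forall V V', isOpen Z V -> isOpen Z V' -> (forall x, V (ee x) <-> V' (ee x)) -> forall t, V t <-> V' t) ->
  (forall U, isOpen Y U -> exists V, isOpen Z V /\ forall x, V (ee x) <-> U x) ->
  irreducible Z -> irreducible Y.
Proof.
  intros HT Hinj Hsurj [[t _] Hirr]. split.
  - apply NNPP; intro Hne.
    assert (H := Hinj (fun _ => True) (fun _ => False) (proj1 HT) (top_empty Z HT)).
    apply (H (fun x => ltac:(exfalso; apply Hne; exists x; auto)) t); auto.
  - intros C1 C2 H1 H2 Hc.
    destruct (Hsurj _ H1) as [V1 [HV1 E1]]. destruct (Hsurj _ H2) as [V2 [HV2 E2]].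
    assert (Hdis : forall s, V1 s /\ V2 s <-> False).
    { apply (Hinj _ _ (proj1 (proj2 HT) _ _ HV1 HV2) (top_empty Z HT)).
      intro x; rewrite E1, E2. destruct (Hc x); tauto. }
    destruct (Hirr (fun s => ~ V1 s) (fun s => ~ V2 s)) as [H|H].
    + unfold closed. apply open_ext with V1; auto. intro; split; [auto|apply NNPP].
    + unfold closed. apply open_ext with V2; auto. intro; split; [auto|apply NNPP].
    + intro s. destruct (Hdis s). destruct (classic (V1 s)); tauto.
    + left; intro x; apply NNPP; intro h. apply (H (ee x)). apply E1; auto.
    + right; intro x; apply NNPP; intro h. apply (H (ee x)). apply E2; auto.
Qed.

Definition pcl (Q : KSubsetSystem) (Y : Space) (HY : is_topology Y) (x : Y) : KSpace Q Y :=
  exist (fun C => exists A, k_rudin (Qk Q) Y A /\ forall y, C y <-> closure A y)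
        (closure (fun z : Y => z = x))
        (ex_intro _ (fun z : Y => z = x) (conj (single_rudin Q Y x HY) (fun y => iff_refl _))).

Lemma succ_stage (Q : KSubsetSystem) (Y Z : Space) (psi : KSpace Q Y -> Z) (ee : Y -> Z) :
  is_topology Y -> homeo psi ->
  (forall x (c : KSpace Q Y), (forall y, proj1_sig c y <-> closure (fun z => z = x) y) -> ee x = psi c) ->
  (forall V, isOpen Z V -> isOpen Y (fun x => V (ee x))) /\
  (forall V V', isOpen Z V -> isOpen Z V' -> (forall x, V (ee x) <-> V' (ee x)) -> forall t, V t <-> V' t) /\
  (forall U, isOpen Y U -> exists V, isOpen Z V /\ forall x, V (ee x) <-> U x).
Proof.
  intros HY [g [gf [fg [cf cg]]]] Hee.
  assert (Hpt : forall x, ee x = psi (pcl Q Y HY x)) by (intro x; apply Hee; intro; reflexivity).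
  assert (Hpull : forall V, isOpen Z V -> exists U, isOpen Y U /\
            (forall c : KSpace Q Y, V (psi c) <-> meets (proj1_sig c) U)).
  { intros V HV. exact (cf V HV). }
  split; [|split].
  - intros V HV; destruct (Hpull V HV) as [U [HU HVU]]; apply open_ext with U; auto.
    intro x; rewrite Hpt, HVU. symmetry. exact (cl1_open _ x U HU).
  - intros V V' HV HV' Hag t.
    destruct (Hpull V HV) as [U [HU HVU]]. destruct (Hpull V' HV') as [U' [HU' HVU']].
    assert (HUU : forall x, U x <-> U' x).
    { intro x. specialize (Hag x). rewrite Hpt, HVU, HVU' in Hag.
      change (meets (closure (fun z => z = x)) U <-> meets (closure (fun z => z = x)) U') in Hag.
      rewrite (cl1_open _ x U HU), (cl1_open _ x U' HU') in Hag. exact Hag. }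
    rewrite <- (fg t), HVU, HVU'. split; intros [y [? ?]]; exists y; split; auto; apply HUU; auto.
  - intros U HU.
    assert (HK : isOpen (KSpace Q Y) (fun c => meets (proj1_sig c) U)).
    { exists U; split; [exact HU | intro; reflexivity]. }
    exists (fun t => meets (proj1_sig (g t)) U). split; [exact (cg _ HK)|].
    intro x. rewrite Hpt, gf. exact (cl1_open _ x U HU).
Qed.

Section Tower.
Variables (Q : KSubsetSystem) (W : Type) (lt : W -> W -> Prop) (X : Space)
  (S : W -> Space) (e : forall v w : W, S v -> S w).
Hypothesis Hwo : well_order lt.
Hypothesis Htow : is_K_tower Q lt X S e.
Hypothesis HX : is_topology X.

Lemma cases3 (w : W) : is_least lt w \/ (exists p, is_succ_of lt p w) \/ is_limit lt w.
Proof.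
  destruct (classic (is_least lt w)); [left; auto|].
  destruct (classic (exists p, is_succ_of lt p w)); [right; left; auto|].
  right; right; split; auto.
Qed.

Lemma least_unique (z w : W) : is_least lt z -> is_least lt w -> z = w.
Proof.
  intros hz hw. destruct Hwo as [_ [_ tri]].
  destruct (tri z w) as [h|[h|h]]; auto; [destruct (hw _ h) | destruct (hz _ h)].
Qed.

Lemma least_le (z v : W) : is_least lt z -> le_of lt z v.
Proof.
  intros hz. destruct Hwo as [_ [_ tri]]. unfold le_of.
  destruct (tri z v) as [h|[h|h]]; auto. destruct (hz _ h).
Qed.

Lemma least_lt_limit (z w : W) : is_least lt z -> is_limit lt w -> lt z w.
Proof.
  intros hz [hw _]. destruct Hwo as [_ [_ tri]].
  destruct (tri z w) as [h|[h|h]]; auto; [subst; contradiction | destruct (hz _ h)].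
Qed.

Lemma exists_least (a : W) : exists z, is_least lt z.
Proof.
  destruct Hwo as [wf _]. induction (wf a) as [a _ IH].
  destruct (classic (is_least lt a)) as [h|h]; [eauto|].
  unfold is_least in h. apply not_all_ex_not in h as [v hv]. apply NNPP in hv. eauto.
Qed.

Lemma tower_top : forall w, is_topology (S w).
Proof.
  destruct Hwo as [wf _]. destruct Htow as [Hid [Hcomp [Hleast [Hsucc Hlim]]]].
  intro w. induction w as [w IH] using (well_founded_ind wf).
  destruct (cases3 w) as [h|[[p h]|h]].
  - destruct (Hleast w h) as [f hf]. exact (homeo_top _ _ _ hf HX).
  - destruct (Hsucc p w h) as [psi [hpsi _]]. exact (homeo_top _ _ _ hpsi (K_top Q _ (IH p (proj1 h)))).
  - destruct (Hlim w h) as [_ [_ Hop]]. split; [|split].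
    + apply Hop. intros v hv. exact (proj1 (IH v hv)).
    + intros U V HU HV. apply Hop. intros v hv.
      apply (proj1 (proj2 (IH v hv))); [apply (proj1 (Hop U) HU) | apply (proj1 (Hop V) HV)]; auto.
    + intros F HF. apply Hop. intros v hv.
      set (G := fun U' : S v -> Prop => exists U, F U /\ U' = (fun x => U (e v w x))).
      assert (HG : forall U', G U' -> isOpen (S v) U')
        by (intros U' [U [FU ->]]; apply (proj1 (Hop U) (HF U FU)); auto).
      pose proof (proj2 (proj2 (IH v hv)) G HG) as H.
      apply open_ext with (2 := H). intro y; simpl; split.
      * intros [U' [[U [FU ->]] HU]]. exists U; auto.
      * intros [U [FU HU]]. exists (fun x => U (e v w x)); split; [exists U; auto | auto].
Qed.

Lemma cont_comp (A B C : Space) (f : A -> B) (g : B -> C) :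
  continuous f -> continuous g -> continuous (fun x => g (f x)).
Proof. intros cf cg V HV. exact (cf _ (cg _ HV)). Qed.

Lemma tower_cont : forall w v, le_of lt v w -> continuous (e v w).
Proof.
  destruct Hwo as [wf _]. pose proof Htow as [Hid [Hcomp [Hleast [Hsucc Hlim]]]].
  intro w. induction w as [w IH] using (well_founded_ind wf).
  intros v [hv | <-].
  2:{ intros V HV. apply open_ext with V; auto. intro x; rewrite Hid; tauto. }
  destruct (cases3 w) as [h|[[p h]|h]].
  - destruct (h _ hv).
  - destruct (Hsucc p w h) as [psi [hpsi Hee]].
    destruct (succ_stage Q _ _ psi _ (tower_top p) hpsi Hee) as [Ha _].
    assert (Hvp : le_of lt v p) by (apply (proj2 h); auto).
    intros V HV.
    apply open_ext with (fun x => V (e p w (e v p x))).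
    + intro x. rewrite <- (Hcomp v p w x Hvp (or_introl (proj1 h))). tauto.
    + exact (cont_comp _ _ _ _ _ (IH p (proj1 h) v Hvp) Ha V HV).
  - destruct (Hlim w h) as [_ [_ Hop]]. intros V HV. exact (proj1 (Hop V) HV v hv).
Qed.

Lemma tower_inj_surj (z : W) (hz : is_least lt z) : forall w,
  (forall V V', isOpen (S w) V -> isOpen (S w) V' ->
     (forall x, V (e z w x) <-> V' (e z w x)) -> forall y, V y <-> V' y) /\
  (forall U, isOpen (S z) U -> exists V, isOpen (S w) V /\ forall x, V (e z w x) <-> U x).
Proof.
  destruct Hwo as [wf _]. pose proof Htow as [Hid [Hcomp [Hleast [Hsucc Hlim]]]].
  intro w. induction w as [w IH] using (well_founded_ind wf).
  destruct (cases3 w) as [h|[[p h]|h]].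
  - pose proof (least_unique z w hz h) as Hzw. subst w. split.
    + intros V V' _ _ H y. specialize (H y). rewrite !Hid in H. exact H.
    + intros U HU. exists U; split; auto. intro x; rewrite Hid; tauto.
  - destruct (Hsucc p w h) as [psi [hpsi Hee]].
    destruct (succ_stage Q _ _ psi _ (tower_top p) hpsi Hee) as [Ha [Hb Hc]].
    destruct (IH p (proj1 h)) as [Ip Sp].
    assert (Hc2 : forall x, e z w x = e p w (e z p x))
      by (intro x; apply Hcomp; [apply least_le; auto | left; exact (proj1 h)]).
    split.
    + intros V V' HV HV' Hag. apply Hb; auto.
      apply Ip; [apply Ha; auto | apply Ha; auto |].
      intro x. rewrite <- !Hc2. auto.
    + intros U HU. destruct (Sp U HU) as [Up [HUp EUp]].
      destruct (Hc Up HUp) as [V [HV EV]]. exists V; split; auto.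
      intro x. rewrite Hc2, EV. auto.
  - destruct (Hlim w h) as [Hcov [Heq Hop]].
    assert (Hc2 : forall v x, lt v w -> e z w x = e v w (e z v x))
      by (intros v x hv; apply Hcomp; [apply least_le; auto | left; exact hv]).
    split.
    + intros V V' HV HV' Hag y. destruct (Hcov y) as [v [x [hv <-]]].
      apply (proj1 (IH v hv) (fun x => V (e v w x)) (fun x => V' (e v w x)));
        [apply (proj1 (Hop V) HV); auto | apply (proj1 (Hop V') HV'); auto |].
      intro x0. rewrite <- !Hc2; auto.
    + intros U HU.
      set (V := fun y => exists v (x : S v), lt v w /\ e v w x = y /\
                  forall U', isOpen (S v) U' -> (forall x0, U' (e z v x0) <-> U x0) -> U' x).
      assert (Hcl : forall v, lt v w -> forall Uv, isOpen (S v) Uv ->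
                (forall x0, Uv (e z v x0) <-> U x0) -> forall x, V (e v w x) <-> Uv x).
      { intros v hv Uv HUv EUv x. split.
        - intros [v' [x' [hv' [Hx' Hall']]]].
          destruct (proj1 (Heq v' v x' x hv' hv) Hx') as [u [hu [hv'u [hvu Hxu]]]].
          destruct (proj2 (IH u hu) U HU) as [Uu [HUu EUu]].
          assert (Hrv : forall t, Uu (e v u t) <-> Uv t).
          { apply (proj1 (IH v hv)); auto.
            - exact (tower_cont u v hvu Uu HUu).
            - intro x0. rewrite <- Hcomp; [| apply least_le; auto | auto]. rewrite EUu, EUv; tauto. }
          apply Hrv. rewrite <- Hxu. apply Hall'.
          + exact (tower_cont u v' hv'u Uu HUu).
          + intro x0. rewrite <- Hcomp; [| apply least_le; auto | auto]. apply EUu.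
        - intro Hx. exists v, x. split; [exact hv | split; [reflexivity|]].
          intros U' HU' EU'. apply (proj1 (IH v hv) Uv U' HUv HU'); auto.
          intro x0; rewrite EUv, EU'; tauto. }
      exists V. split.
      * apply Hop. intros v hv. destruct (proj2 (IH v hv) U HU) as [Uv [HUv EUv]].
        apply open_ext with Uv; auto. intro x. symmetry. apply Hcl; auto.
      * intro x. pose proof (least_lt_limit z w hz h) as hzw.
        apply (Hcl z hzw U HU). intro x0; rewrite Hid; tauto.
Qed.

End Tower.

Theorem mainTheorem8 (Q : KSubsetSystem) (W : Type) (lt : W -> W -> Prop)
    (alpha : W) (X : Space) (S : W -> Space) (e : forall v w : W, S v -> S w) :
  well_order lt -> non_limit lt alpha ->
  is_topology X -> T0 X ->
  is_K_tower Q lt X S e ->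
  is_special Q lt S alpha ->
  irreducible X.
Proof.
  intros Hwo _ HX _ Htow [_ [_ [Hg _]]].
  destruct (exists_least _ _ Hwo alpha) as [z hz].
  pose proof Htow as [_ [_ [Hleast _]]].
  destruct (Hleast z hz) as [f hf].
  apply (homeo_irr _ _ f hf).
  destruct (tower_inj_surj _ _ _ _ _ _ Hwo Htow HX z hz alpha) as [Hi Hs].
  apply (transfer_irr _ _ (e z alpha) (tower_top _ _ _ _ _ _ Hwo Htow HX alpha) Hi Hs).
  apply greatest_irr; exact Hg.
Qed.
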